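(* Fix $K\ge 1$ classes, and for each class $k\in\{1,\dots,K\}$ a decomposable stratified graph $G_L^k$ on the feature set $\Delta$, with its clique and separator factor structures as described in the context. Fix a test data set $\mathbf{X}^T$ of $n$ observations and a labeling $T\in\{1,\dots,K\}^n$ of the test data. Let the training data grow, and suppose that for every class $k$, every clique $C\in\mathcal{C}(G_L^k)$ and every separator $S\in\mathcal{S}(G_L^k)$, and every index triple $(j,i,l)$ of the corresponding factor, the training count $m(x_j^i\mid\pi_j^l)$ computed from $\mathbf{X}^{R,k}$ tends to $\infty$ (so that every updated hyperparameter $\beta_{jil}=\alpha_{jil}+m(x_j^i\mid \pi_j^l)\to\infty$). This holds, for example, almost surely when the training data of each class are an i.i.d. sample of size tending to infinity from a distribution under which all these cells have strictly positive probability. Then \[ \log P_{\mathrm{sim}}(T\mid \mathbf{X}^T,\mathbf{X}^R,R,G_L^A)-\log P_{\mathrm{mar}}(T\mid \mathbf{X}^T,\mathbf{X}^R,R,G_L^A)\longrightarrow 0 . \] That is, the marginal and simultaneous predictive SGM classifiers are asymptotically equivalent as the size of the training data goes to infinity.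
   Context: All features $X_\delta$, $\delta\in\Delta$, are binary (more generally finite categorical, variable $X_j$ having $k_j$ outcomes). Stratified graphs. For an undirected graph $G=(\Delta,E)$ and an edge $\{\delta,\gamma\}\in E$, let $L_{\{\delta,\gamma\}}$ be the set of nodes adjacent to both $\delta$ and $\gamma$. A stratum of the edge is a set $\mathcal{L}_{\{\delta,\gamma\}}$ of outcomes $x_{L_{\{\delta,\gamma\}}}$ for which $X_\delta\perp X_\gamma\mid X_{L_{\{\delta,\gamma\}}}=x_{L_{\{\delta,\gamma\}}}$. A stratified graph (SG) $G_L$ is a pair $(G,L)$, where $L$ is the collection of strata attached to edges of $G$. It is decomposable if $G$ is decomposable (chordal), no stratified edge lies in a separator of $G$, and within each clique $C$ all stratified edges share at least one common node. Factor formula. For a clique $C$ (or separator $S$) with $d$ variables, order them $X_1,\dots,X_d$, where, if $C$ contains stratified edges, $X_d$ is a node common to all of them. For $j<d$, and for $j=d$ when there are no strata, the parent outcomes (outcomes of $X_1,\dots,X_{j-1}$) are each their own group. For $j=d$ with strata, the outcomes of $X_1,\dots,X_{d-1}$ are partitioned into $q_d$ groups: each outcome $x$ in the stratum of an edge $\{d',d\}$ merges the two parent outcomes that agree with $x$ on the common neighbours and differ only in $X_{d'}$, and groups are the resulting equivalence classes. Let $q_j$ be the number of groups for $X_j$. For a data matrix $\mathbf{Y}$ on the variables of $C$, let $n(\pi_j^l)$ be the number of rows whose parent outcome lies in group $l$, and $n(x_j^i\mid\pi_j^l)$ the number of those rows in which $X_j=i$. For positive hyperparameters $\beta_{jil}$,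 \[ P_C(\mathbf{Y})=\prod_{j=1}^{d}\prod_{l=1}^{q_j}\frac{\Gamma(\sum_{i=1}^{k_j}\beta_{jil})}{\Gamma(n(\pi_j^l)+\sum_{i=1}^{k_j}\beta_{jil})}\prod_{i=1}^{k_j}\frac{\Gamma(n(x_j^i\mid\pi_j^l)+\beta_{jil})}{\Gamma(\beta_{jil})}, \] and analogously for $P_S$. Predictive scores. Training data $\mathbf{X}^R$ consist of $m$ observations with class labels $R$, and $\mathbf{X}^{R,k}$ denotes the training data of class $k$. In the posterior predictive version $P_C(\cdot\mid \mathbf{X}^{R,k})$ one uses $\beta_{jil}=\alpha_{jil}+m(x_j^i\mid\pi_j^l)$, where $\alpha_{jil}>0$ are fixed prior hyperparameters and $m(x_j^i\mid\pi_j^l)$ is the corresponding count in $\mathbf{X}^{R,k}$. Write $G_L^A=(G_L^1,\dots,G_L^K)$. Let $\mathbf{X}_i^T$ be the $i$-th test observation, and $\mathbf{X}^{T,k}$ the test observations assigned to class $k$ by $T$. Subscripts $C$ and $S$ denote restriction to the variables in $C$ or $S$. Then \[ P_{\mathrm{mar}}(T\mid\cdot)=\prod_{i=1}^n\frac{\prod_{C\in\mathcal{C}(G_L^{T(i)})}P_C(\mathbf{X}^T_{i,C}\mid \mathbf{X}^{R,T(i)})}{\prod_{S\in\mathcal{S}(G_L^{T(i)})}P_S(\mathbf{X}^T_{i,S}\mid \mathbf{X}^{R,T(i)})},\qquad P_{\mathrm{sim}}(T\mid\cdot)=\prod_{k=1}^K\frac{\prod_{C\in\mathcal{C}(G_L^{k})}P_C(\mathbf{X}^{T,k}_{C}\mid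 \mathbf{X}^{R,k})}{\prod_{S\in\mathcal{S}(G_L^{k})}P_S(\mathbf{X}^{T,k}_{S}\mid \mathbf{X}^{R,k})}. \] The marginal, respectively simultaneous, classifier chooses the $T$ maximizing $P_{\mathrm{mar}}$, respectively $P_{\mathrm{sim}}$. *)

(* Defs.v *)
From Stdlib Require Import Reals List Arith.
Import ListNotations.
Open Scope R_scope.

(** Observations: an observation assigns to each feature (indexed by nat) an
    outcome in {0,..,card v - 1}; [card v] is the number of outcomes k_v. *)
Definition obs := nat -> nat.

Fixpoint prodR (n : nat) (f : nat -> R) : R :=
  match n with O => 1 | S m => prodR m f * f m end.
Definition sumR (n : nat) (f : nat -> R) : R :=
  fold_right Rplus 0 (map f (seq 0 n)).
Definition prodL {A} (l : list A) (f : A -> R) : R :=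
  fold_right (fun a r => f a * r) 1 l.

(** Rising factorial: rf b n = b (b+1) ... (b+n-1) = Gamma(b+n)/Gamma(b). *)
Fixpoint rf (b : R) (n : nat) : R :=
  match n with O => 1 | S m => rf b m * (b + INR m) end.

(** Factor structure of a clique or separator C with d variables X_1..X_d
    (ordered as in the paper, [fvars] lists the feature indices in that order;
    position j = 0..d-1 is X_{j+1}).  For position j, [fq j] is the number of
    groups q_j, and [fgrp j pa] is the group (in 0..q_j-1) of the parent
    outcome pa = (x_1,..,x_{j-1}).  [falpha j i l] are the prior
    hyperparameters alpha_{jil}. *)
Record factor := mkFactor {
  fvars : list nat;
  fq : nat -> nat;
  fgrp : nat -> list nat -> nat;
  falpha : nat -> nat -> nat -> R
}.

Definition fvar (F : factor) (j : nat) : nat := nth j (fvars F) 0%nat.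
Definition parents (F : factor) (j : nat) (x : obs) : list nat :=
  map x (firstn j (fvars F)).
Definition in_group (F : factor) (j l : nat) (x : obs) : bool :=
  Nat.eqb (fgrp F j (parents F j x)) l.

Definition cnt_group (F : factor) (j l : nat) (Y : list obs) : nat :=
  length (filter (in_group F j l) Y).
Definition cnt (F : factor) (j i l : nat) (Y : list obs) : nat :=
  length (filter (fun x => andb (in_group F j l x) (Nat.eqb (x (fvar F j)) i)) Y).

(** Posterior predictive factor P_C(Y | Xtrain), with
    beta_{jil} = alpha_{jil} + m(x_j^i | pi_j^l) computed from Xtrain.
    Gamma ratios with integer shifts are written as rising factorials. *)
Definition beta (card : nat -> nat) (F : factor) (Xtr : list obs) (j i l : nat) : R :=
  falpha F j i l + INR (cnt F j i l Xtr).

Definition Pfactor (card : nat -> nat) (F : factor) (Xtr Y : list obs) : R :=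
  prodR (length (fvars F)) (fun j =>
   let kj := card (fvar F j) in
   prodR (fq F j) (fun l =>
     prodR kj (fun i => rf (beta card F Xtr j i l) (cnt F j i l Y))
     / rf (sumR kj (fun i => beta card F Xtr j i l)) (cnt_group F j l Y))).

Definition Pgraph (card : nat -> nat) (cl sp : list factor) (Xtr Y : list obs) : R :=
  prodL cl (fun C => Pfactor card C Xtr Y) / prodL sp (fun S => Pfactor card S Xtr Y).

(** Test data: observations test 0, ..., test (n-1); labeling T (classes 0..K-1).
    Training data of class k: Xtr k.  cliques k / seps k: factor structures of
    the cliques and separators of G_L^k. *)
Definition Pmar (card : nat -> nat) (cliques seps : nat -> list factor)
  (Xtr : nat -> list obs) (n : nat) (test : nat -> obs) (T : nat -> nat) : R :=
  prodR n (fun i => Pgraph card (cliques (T i)) (seps (T i)) (Xtr (T i)) [test i]).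

Definition test_class (n : nat) (test : nat -> obs) (T : nat -> nat) (k : nat) : list obs :=
  map test (filter (fun i => Nat.eqb (T i) k) (seq 0 n)).

Definition Psim (card : nat -> nat) (cliques seps : nat -> list factor)
  (Xtr : nat -> list obs) (K n : nat) (test : nat -> obs) (T : nat -> nat) : R :=
  prodR K (fun k => Pgraph card (cliques k) (seps k) (Xtr k) (test_class n test T k)).

(* Main.v *)
Require Import Defs.
From Stdlib Require Import Reals List Arith Lia Lra.
Import ListNotations.
Open Scope R_scope.

Lemma Un_cv_ext (u v : nat -> R) l : (forall N, u N = v N) -> Un_cv u l -> Un_cv v l.
Proof. intros H Hu e He. destruct (Hu e He) as [M HM]. exists M. intros N HN.
  rewrite <- H. auto. Qed.

Lemma cv_const1 : Un_cv (fun _ => 1) 1.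
Proof. intros e He. exists O. intros. unfold Rdist. rewrite Rminus_diag, Rabs_R0. lra. Qed.

Lemma cv_mult1 (a b : nat -> R) : Un_cv a 1 -> Un_cv b 1 -> Un_cv (fun N => a N * b N) 1.
Proof. intros. replace 1 with (1*1) by ring. apply CV_mult; auto. Qed.

Lemma cv_div1 (a b : nat -> R) : Un_cv a 1 -> Un_cv b 1 -> Un_cv (fun N => a N / b N) 1.
Proof. intros Ha Hb. unfold Rdiv. apply cv_mult1; auto.
  assert (Hc : continuity_pt (/ id) 1).
  { apply continuity_pt_inv. apply derivable_continuous_pt. apply derivable_pt_id.
    unfold id. lra. }
  pose proof (continuity_seq _ _ _ Hc Hb) as H. unfold inv_fct, id in H.
  rewrite Rinv_1 in H. exact H. Qed.

Lemma cv_ln1 (a : nat -> R) : Un_cv a 1 -> Un_cv (fun N => ln (a N)) 0.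
Proof. intros Ha. rewrite <- ln_1. apply continuity_seq; auto.
  apply derivable_continuous_pt. exists (/1). apply derivable_pt_lim_ln. lra. Qed.

Lemma cv_ratio (b : nat -> R) c : cv_infty b -> Un_cv (fun N => (b N + c) / b N) 1.
Proof. intros Hb e He. destruct (Hb (Rabs c / e + 1)) as [M HM]. exists M.
  intros N HN. specialize (HM N HN). unfold Rdist.
  assert (H0 : 0 <= Rabs c / e) by (unfold Rdiv; apply Rmult_le_pos; [apply Rabs_pos|left; apply Rinv_0_lt_compat; lra]).
  assert (Hp : 0 < b N) by lra.
  replace ((b N + c) / b N - 1) with (c / b N) by (field; lra).
  unfold Rdiv. rewrite Rabs_mult, Rabs_inv, (Rabs_right (b N)) by lra.
  apply (Rmult_lt_reg_r (b N)); auto. rewrite Rmult_assoc, Rinv_l by lra.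
  rewrite Rmult_1_r.
  assert (Rabs c / e < b N) by lra.
  apply (Rmult_lt_compat_l e) in H; auto. unfold Rdiv in H.
  replace (e * (Rabs c * / e)) with (Rabs c) in H by (field; lra). lra. Qed.

Lemma prodR_cv (f : nat -> nat -> R) m :
  (forall j, (j < m)%nat -> Un_cv (fun N => f N j) 1) -> Un_cv (fun N => prodR m (f N)) 1.
Proof. induction m; intros H; simpl. apply cv_const1.
  apply cv_mult1. apply IHm; intros; apply H; lia. apply H; lia. Qed.

Lemma prodL_cv {A} (f : nat -> A -> R) l :
  (forall a, In a l -> Un_cv (fun N => f N a) 1) -> Un_cv (fun N => prodL l (f N)) 1.
Proof. induction l; intros H; simpl. apply cv_const1.
  apply cv_mult1. apply H; simpl; auto. apply IHl; intros; apply H; simpl; auto. Qed.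

Lemma rf_pow_prod b m : rf b m / b ^ m = prodR m (fun t => (b + INR t) / b).
Proof. induction m; simpl. field. rewrite <- IHm. unfold Rdiv. rewrite Rinv_mult. ring. Qed.

Lemma rf_ratio_cv (b : nat -> R) m : cv_infty b -> Un_cv (fun N => rf (b N) m / b N ^ m) 1.
Proof. intros Hb. apply (Un_cv_ext (fun N => prodR m (fun t => (b N + INR t) / b N))).
  intros; symmetry; apply rf_pow_prod.
  apply (prodR_cv (fun N t => (b N + INR t) / b N)). intros; apply cv_ratio; auto. Qed.

Lemma cv_infty_le (u v : nat -> R) : cv_infty u -> (forall N, u N <= v N) -> cv_infty v.
Proof. intros Hu H M. destruct (Hu M) as [K HK]. exists K. intros n Hn.
  specialize (HK n Hn). specialize (H n). lra. Qed.

Lemma prodR_ext m f g : (forall j, (j < m)%nat -> f j = g j) -> prodR m f = prodR m g.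
Proof. induction m; intros H; simpl; auto. rewrite IHm, H; auto; intros; apply H; lia. Qed.

Lemma prodR_mul m f g : prodR m (fun j => f j * g j) = prodR m f * prodR m g.
Proof. induction m; simpl. ring. rewrite IHm. ring. Qed.

Lemma prodR_div m f g : prodR m f / prodR m g = prodR m (fun j => f j / g j).
Proof. induction m; simpl. field. rewrite <- IHm. unfold Rdiv. rewrite !Rinv_mult. ring. Qed.

Lemma prodR_one m : prodR m (fun _ => 1) = 1.
Proof. induction m; simpl; auto. rewrite IHm; ring. Qed.

Lemma prodL_ext {A} (l : list A) f g : (forall a, In a l -> f a = g a) -> prodL l f = prodL l g.
Proof. induction l; intros H; simpl; auto. rewrite IHl, H; simpl; auto.
  intros; apply H; simpl; auto. Qed.

Lemma prodL_mul {A} (l : list A) f g : prodL l (fun a => f a * g a) = prodL l f * prodL l g.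
Proof. induction l; simpl. ring. rewrite IHl. ring. Qed.

Lemma prodL_div {A} (l : list A) f g : prodL l f / prodL l g = prodL l (fun a => f a / g a).
Proof. induction l; simpl. field. rewrite <- IHl. unfold Rdiv. rewrite !Rinv_mult. ring. Qed.

Lemma prodL_app {A} (l1 l2 : list A) f : prodL (l1 ++ l2) f = prodL l1 f * prodL l2 f.
Proof. induction l1; simpl. ring. rewrite IHl1. ring. Qed.

Lemma prodL_map {A B} (g : A -> B) l f : prodL (map g l) f = prodL l (fun a => f (g a)).
Proof. induction l; simpl; auto. rewrite IHl; auto. Qed.

Lemma prodL_prodR {A} (l : list A) m (f : A -> nat -> R) :
  prodL l (fun a => prodR m (f a)) = prodR m (fun j => prodL l (fun a => f a j)).
Proof. induction l; simpl. symmetry; apply prodR_one.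
  rewrite IHl, <- prodR_mul. reflexivity. Qed.

Lemma prodL_swap {A B} (l1 : list A) (l2 : list B) (f : A -> B -> R) :
  prodL l1 (fun a => prodL l2 (f a)) = prodL l2 (fun b => prodL l1 (fun a => f a b)).
Proof. induction l1; simpl.
  - induction l2; simpl; auto. rewrite <- IHl2; ring.
  - rewrite IHl1. rewrite <- prodL_mul. reflexivity. Qed.

Lemma prodR_pos m f : (forall j, (j < m)%nat -> 0 < f j) -> 0 < prodR m f.
Proof. induction m; intros H; simpl. lra. apply Rmult_lt_0_compat. apply IHm; intros; apply H; lia.
  apply H; lia. Qed.

Lemma prodL_pos {A} (l : list A) f : (forall a, In a l -> 0 < f a) -> 0 < prodL l f.
Proof. induction l; intros H; simpl. lra. apply Rmult_lt_0_compat. apply H; simpl; auto.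
  apply IHl; intros; apply H; simpl; auto. Qed.

Lemma rf_pos b n : 0 < b -> 0 < rf b n.
Proof. intros Hb; induction n; simpl. lra. apply Rmult_lt_0_compat; auto.
  pose proof (pos_INR n); lra. Qed.

Lemma fold_plus l c : fold_right Rplus c l = fold_right Rplus 0 l + c.
Proof. induction l; simpl. ring. rewrite IHl; ring. Qed.

Lemma sumR_S m f : sumR (S m) f = sumR m f + f m.
Proof. unfold sumR. rewrite seq_S, map_app, fold_right_app. simpl.
  rewrite fold_plus. ring. Qed.

Lemma sumR_nonneg m f : (forall i, (i < m)%nat -> 0 <= f i) -> 0 <= sumR m f.
Proof. induction m; intros H. unfold sumR; simpl; lra. rewrite sumR_S.
  assert (0 <= sumR m f) by (apply IHm; intros; apply H; lia).
  assert (0 <= f m) by (apply H; lia). lra. Qed.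

Lemma sumR_ge m f i0 : (forall i, (i < m)%nat -> 0 <= f i) -> (i0 < m)%nat -> f i0 <= sumR m f.
Proof. induction m; intros H Hi. lia. rewrite sumR_S.
  assert (0 <= sumR m f) by (apply sumR_nonneg; intros; apply H; lia).
  assert (0 <= f m) by (apply H; lia).
  destruct (Nat.eq_dec i0 m). subst. lra.
  assert (f i0 <= sumR m f) by (apply IHm; [intros; apply H; lia| lia]). lra. Qed.

Lemma rf_01 b n : (n <= 1)%nat -> rf b n = b ^ n.
Proof. intros H. destruct n as [|[|n]]; simpl; try lia; ring. Qed.

Lemma regroup (h : nat -> nat -> R) (T : nat -> nat) K n :
  (forall i, (i < n)%nat -> (T i < K)%nat) ->
  prodR n (fun i => h (T i) i) =
  prodR K (fun k => prodL (filter (fun i => Nat.eqb (T i) k) (seq 0 n)) (h k)).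
Proof. induction n; intros HT; cbn [prodR].
  - symmetry. apply prodR_one.
  - rewrite IHn by (intros; apply HT; lia).
    rewrite (prodR_ext K (fun k => prodL (filter (fun i => Nat.eqb (T i) k) (seq 0 (S n))) (h k))
      (fun k => prodL (filter (fun i => Nat.eqb (T i) k) (seq 0 n)) (h k) *
                (if Nat.eqb (T n) k then h k n else 1))).
    + rewrite prodR_mul. f_equal.
      assert (HTn : (T n < K)%nat) by (apply HT; lia). clear HT IHn.
      induction K; simpl. lia.
      destruct (Nat.eq_dec (T n) K).
      * rewrite e, Nat.eqb_refl. rewrite (prodR_ext K _ (fun _ => 1)). rewrite prodR_one. ring.
        intros j Hj. destruct (Nat.eqb_spec K j); auto; lia.
      * rewrite IHK by lia. destruct (Nat.eqb_spec (T n) K); [lia|ring].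
    + intros k _. rewrite seq_S, filter_app, prodL_app. simpl.
      destruct (Nat.eqb (T n) k); simpl; ring.
Qed.

Definition Q (card : nat -> nat) (F : factor) (Xtr Y : list obs) : R :=
  prodR (length (fvars F)) (fun j =>
   let kj := card (fvar F j) in
   prodR (fq F j) (fun l =>
     prodR kj (fun i => beta card F Xtr j i l ^ (cnt F j i l Y))
     / (sumR kj (fun i => beta card F Xtr j i l)) ^ (cnt_group F j l Y))).

Lemma cnt_single F j i l x : (cnt F j i l [x] <= 1)%nat.
Proof. unfold cnt; simpl. destruct (andb _ _); simpl; lia. Qed.
Lemma cnt_group_single F j l x : (cnt_group F j l [x] <= 1)%nat.
Proof. unfold cnt_group; simpl. destruct (in_group _ _ _ _); simpl; lia. Qed.
Lemma cnt_cons F j i l x Y : cnt F j i l (x :: Y) = (cnt F j i l [x] + cnt F j i l Y)%nat.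
Proof. unfold cnt; simpl. destruct (andb _ _); reflexivity. Qed.
Lemma cnt_group_cons F j l x Y : cnt_group F j l (x :: Y) = (cnt_group F j l [x] + cnt_group F j l Y)%nat.
Proof. unfold cnt_group; simpl. destruct (in_group _ _ _ _); reflexivity. Qed.

Lemma Pfactor_single card F Xtr x : Pfactor card F Xtr [x] = Q card F Xtr [x].
Proof. unfold Pfactor, Q. apply prodR_ext; intros j _. apply prodR_ext; intros l _.
  rewrite rf_01 by apply cnt_group_single. f_equal. apply prodR_ext; intros i _.
  apply rf_01, cnt_single. Qed.

Lemma Q_nil card F Xtr : Q card F Xtr [] = 1.
Proof. unfold Q. rewrite <- (prodR_one (length (fvars F))). apply prodR_ext; intros j _.
  rewrite <- (prodR_one (fq F j)). apply prodR_ext; intros l _.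
  simpl. rewrite prodR_one. field. Qed.

Lemma Q_cons card F Xtr x Y : Q card F Xtr (x :: Y) = Q card F Xtr [x] * Q card F Xtr Y.
Proof. unfold Q. rewrite <- prodR_mul. apply prodR_ext; intros j _.
  rewrite <- prodR_mul. apply prodR_ext; intros l _.
  rewrite cnt_group_cons, pow_add.
  rewrite (prodR_ext _ _ (fun i => beta card F Xtr j i l ^ cnt F j i l [x] *
      beta card F Xtr j i l ^ cnt F j i l Y)).
  rewrite prodR_mul. unfold Rdiv. rewrite Rinv_mult. ring.
  intros i _. rewrite cnt_cons, pow_add. reflexivity. Qed.

Lemma Q_mult card F Xtr Y : Q card F Xtr Y = prodL Y (fun x => Q card F Xtr [x]).
Proof. induction Y; simpl. apply Q_nil. rewrite Q_cons, IHY. reflexivity. Qed.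

Lemma Pfactor_Q card F Xtr Y : Pfactor card F Xtr Y / Q card F Xtr Y =
  prodR (length (fvars F)) (fun j => prodR (fq F j) (fun l =>
    prodR (card (fvar F j)) (fun i => rf (beta card F Xtr j i l) (cnt F j i l Y) /
                                     beta card F Xtr j i l ^ (cnt F j i l Y)) /
    (rf (sumR (card (fvar F j)) (fun i => beta card F Xtr j i l)) (cnt_group F j l Y) /
     (sumR (card (fvar F j)) (fun i => beta card F Xtr j i l)) ^ (cnt_group F j l Y)))).
Proof. unfold Pfactor, Q. rewrite prodR_div. apply prodR_ext; intros j _.
  rewrite prodR_div. apply prodR_ext; intros l _. rewrite <- prodR_div.
  unfold Rdiv. rewrite !Rinv_mult, !Rinv_inv. ring. Qed.

Lemma Pfactor_pos card F Xtr Y :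
  (forall v, (1 <= card v)%nat) ->
  (forall j i l, (j < length (fvars F))%nat -> (i < card (fvar F j))%nat ->
       (l < fq F j)%nat -> 0 < falpha F j i l) ->
  0 < Pfactor card F Xtr Y.
Proof. intros Hc Ha. unfold Pfactor. apply prodR_pos; intros j Hj.
  apply prodR_pos; intros l Hl.
  assert (Hb : forall i, (i < card (fvar F j))%nat -> 0 < beta card F Xtr j i l).
  { intros i Hi. unfold beta. pose proof (pos_INR (cnt F j i l Xtr)). pose proof (Ha j i l Hj Hi Hl). lra. }
  apply Rdiv_lt_0_compat. apply prodR_pos; intros; apply rf_pos; auto.
  apply rf_pos. specialize (Hc (fvar F j)).
  pose proof (sumR_ge (card (fvar F j)) (fun i => beta card F Xtr j i l) 0
    (fun i Hi => Rlt_le _ _ (Hb i Hi)) ltac:(lia)). pose proof (Hb 0%nat ltac:(lia)). lra.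
Qed.

Lemma Pfactor_cv card F (tr : nat -> list obs) Y :
  (forall v, (1 <= card v)%nat) ->
  (forall j i l, (j < length (fvars F))%nat -> (i < card (fvar F j))%nat ->
       (l < fq F j)%nat -> 0 < falpha F j i l) ->
  (forall j i l, (j < length (fvars F))%nat -> (i < card (fvar F j))%nat ->
       (l < fq F j)%nat -> cv_infty (fun N => INR (cnt F j i l (tr N)))) ->
  Un_cv (fun N => Pfactor card F (tr N) Y / Q card F (tr N) Y) 1.
Proof. intros Hc Ha Hcv.
  apply (Un_cv_ext (fun N => prodR (length (fvars F)) (fun j => prodR (fq F j) (fun l =>
    prodR (card (fvar F j)) (fun i => rf (beta card F (tr N) j i l) (cnt F j i l Y) /
                                     beta card F (tr N) j i l ^ (cnt F j i l Y)) /
    (rf (sumR (card (fvar F j)) (fun i => beta card F (tr N) j i l)) (cnt_group F j l Y) /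
     (sumR (card (fvar F j)) (fun i => beta card F (tr N) j i l)) ^ (cnt_group F j l Y)))))).
  { intros; symmetry; apply Pfactor_Q. }
  apply (prodR_cv (fun N j => _)). intros j Hj.
  apply (prodR_cv (fun N l => _)). intros l Hl.
  assert (Hb : forall i, (i < card (fvar F j))%nat -> cv_infty (fun N => beta card F (tr N) j i l)).
  { intros i Hi. apply (cv_infty_le _ _ (Hcv j i l Hj Hi Hl)). intros N. unfold beta.
    pose proof (Ha j i l Hj Hi Hl). lra. }
  apply cv_div1.
  - apply (prodR_cv (fun N i => _)). intros i Hi.
    apply (rf_ratio_cv (fun N => beta card F (tr N) j i l)). auto.
  - apply (rf_ratio_cv (fun N => sumR _ (fun i => beta card F (tr N) j i l))).
    specialize (Hc (fvar F j)).
    apply (cv_infty_le _ _ (Hb 0%nat ltac:(lia))). intros N.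
    apply (sumR_ge _ (fun i => beta card F (tr N) j i l)); [|lia].
    intros i Hi. unfold beta. pose proof (pos_INR (cnt F j i l (tr N))). pose proof (Ha j i l Hj Hi Hl). lra.
Qed.

Definition QG card (cl sp : list factor) Xtr Y :=
  prodL cl (fun C => Q card C Xtr Y) / prodL sp (fun S => Q card S Xtr Y).

Lemma Pgraph_single card cl sp Xtr x : Pgraph card cl sp Xtr [x] = QG card cl sp Xtr [x].
Proof. unfold Pgraph, QG. rewrite !(prodL_ext _ (fun S => Pfactor card S Xtr [x]) (fun S => Q card S Xtr [x])) by (intros; apply Pfactor_single). reflexivity. Qed.

Lemma QG_mult card cl sp Xtr Y : QG card cl sp Xtr Y = prodL Y (fun x => QG card cl sp Xtr [x]).
Proof. unfold QG.
  rewrite (prodL_ext cl _ (fun a => prodL Y (fun x => Q card a Xtr [x]))) by (intros; apply Q_mult).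
  rewrite (prodL_ext sp _ (fun a => prodL Y (fun x => Q card a Xtr [x]))) by (intros; apply Q_mult).
  rewrite !(prodL_swap _ Y). apply prodL_div. Qed.

Lemma Pgraph_QG card cl sp Xtr Y : Pgraph card cl sp Xtr Y / QG card cl sp Xtr Y =
  prodL cl (fun C => Pfactor card C Xtr Y / Q card C Xtr Y) /
  prodL sp (fun C => Pfactor card C Xtr Y / Q card C Xtr Y).
Proof. unfold Pgraph, QG. rewrite <- !prodL_div. unfold Rdiv.
  rewrite !Rinv_mult, !Rinv_inv. ring. Qed.

Theorem theorem1
  (card : nat -> nat) (K : nat) (cliques seps : nat -> list factor)
  (n : nat) (test : nat -> obs) (T : nat -> nat)
  (train : nat -> nat -> list obs) :
  (1 <= K)%nat ->
  (forall v, (1 <= card v)%nat) ->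
  (forall i, (i < n)%nat -> (T i < K)%nat) ->
  (forall i v, (i < n)%nat -> (test i v < card v)%nat) ->
  (forall N k x v, In x (train N k) -> (x v < card v)%nat) ->
  (forall k F, (k < K)%nat -> In F (cliques k ++ seps k) ->
     forall j i l, (j < length (fvars F))%nat -> (i < card (fvar F j))%nat ->
       (l < fq F j)%nat -> 0 < falpha F j i l) ->
  (forall k F, (k < K)%nat -> In F (cliques k ++ seps k) ->
     forall j i l, (j < length (fvars F))%nat -> (i < card (fvar F j))%nat ->
       (l < fq F j)%nat ->
       cv_infty (fun N => INR (cnt F j i l (train N k)))) ->
  Un_cv (fun N => ln (Psim card cliques seps (train N) K n test T)
                  - ln (Pmar card cliques seps (train N) n test T)) 0.
Proof.
  intros HK Hc HT _ _ Ha Hcv.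
  assert (Hpos : forall k Xtr Y, (k < K)%nat -> 0 < Pgraph card (cliques k) (seps k) Xtr Y).
  { intros k Xtr Y Hk. unfold Pgraph. apply Rdiv_lt_0_compat; apply prodL_pos; intros F HF;
    apply Pfactor_pos; auto; intros; eapply Ha; eauto; apply in_or_app; auto. }
  assert (HPmar : forall N, Pmar card cliques seps (train N) n test T =
     prodR K (fun k => QG card (cliques k) (seps k) (train N k) (test_class n test T k))).
  { intros N. unfold Pmar.
    rewrite (prodR_ext n _ (fun i => (fun k i => QG card (cliques k) (seps k) (train N k) [test i]) (T i) i))
      by (intros; apply Pgraph_single).
    rewrite (regroup (fun k i => QG card (cliques k) (seps k) (train N k) [test i]) T K n HT). apply prodR_ext; intros k _.
    unfold test_class. rewrite QG_mult, prodL_map. reflexivity. }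
  apply (Un_cv_ext (fun N => ln (Psim card cliques seps (train N) K n test T /
                               Pmar card cliques seps (train N) n test T))).
  { intros N. unfold Rdiv. rewrite ln_mult, ln_Rinv. ring.
    all: try apply Rinv_0_lt_compat.
    all: first [ unfold Psim; apply prodR_pos; intros; apply Hpos; auto
               | unfold Pmar; apply prodR_pos; intros; apply Hpos; auto ]. }
  apply cv_ln1. apply (Un_cv_ext (fun N => prodR K (fun k =>
      Pgraph card (cliques k) (seps k) (train N k) (test_class n test T k) /
      QG card (cliques k) (seps k) (train N k) (test_class n test T k)))).
  { intros N. rewrite HPmar. unfold Psim. symmetry. apply prodR_div. }
  apply (prodR_cv (fun N k => _)). intros k Hk.
  apply (Un_cv_ext (fun N =>
    prodL (cliques k) (fun C => Pfactor card C (train N k) (test_class n test T k) / Q card C (train N k) (test_class n test T k)) /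
    prodL (seps k) (fun C => Pfactor card C (train N k) (test_class n test T k) / Q card C (train N k) (test_class n test T k)))).
  { intros; symmetry; apply Pgraph_QG. }
  apply cv_div1; apply (prodL_cv (fun N C => _)); intros F HF;
    apply (Pfactor_cv card F (fun N => train N k)); auto; intros;
    [eapply Ha | eapply Hcv | eapply Ha | eapply Hcv]; eauto; apply in_or_app; auto.
Qed.
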